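(* Let $n\in\mathbb{N}$, let $I$ be a closed interval, and let $f_j\in\mathscr{E}'(I)$ for $j\in\mathbb{Z}_n$. Then there exists $\alpha\in\mathbb{C}$ with $\alpha^n=1$ such that \[ \inf\mathop{\rm supp}\sum_{j\in\mathbb{Z}_n}\alpha^j f_j=\min_{j\in\mathbb{Z}_n}\inf\mathop{\rm supp} f_j . \]
   Context: $\mathbb{Z}_n=\mathbb{Z}\bmod n$. $\mathscr{E}'(I)$ denotes distributions on $\mathbb{R}$ supported in $I$ (equivalently, for an interval of $\mathbb{T}$ identified with a lifted interval of $\mathbb{R}$). *)

(* Defs.v *)
From HB Require Import structures.
From mathcomp Require Import all_boot all_order all_algebra.
From mathcomp Require Import all_classical all_reals all_analysis.
From mathcomp Require Import complex.
Set Implicit Arguments. Unset Strict Implicit. Unset Printing Implicit Defensive.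
Import Order.TTheory GRing.Theory Num.Theory.
Local Open Scope ring_scope.
Local Open Scope classical_set_scope.

Definition smooth (R : realType) (phi : R -> R) : Prop :=
  forall (k : nat) (x : R), derivable (derive1n k phi) x 1.

(* A complex-valued distribution with compact support, given by its action on
   real-valued smooth test functions (complex-linear extension is unique).
   E'(R) = continuous linear functionals on C^oo(R): linearity plus the
   seminorm estimate |u phi| <= C * sum_{k<=N} sup_{|x|<=r} |phi^(k)(x)|. *)
Definition is_cdistr (R : realType) (u : (R -> R) -> R[i]) : Prop :=
  (forall phi psi, smooth phi -> smooth psi ->
     u (fun x => phi x + psi x) = u phi + u psi) /\
  (forall (c : R) phi, smooth phi -> u (fun x => c * phi x) = (c%:C)%C * u phi) /\
  (exists (C r : R) (N : nat), forall phi, smooth phi ->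
     `|u phi| <= (C * \sum_(k < N.+1)
                   sup [set `|derive1n k phi x| | x in `[- r, r]])%:C%C).

Definition dsupp (R : realType) (u : (R -> R) -> R[i]) : set R :=
  [set x : R | ~ exists2 e : R, 0 < e & forall phi : R -> R, smooth phi ->
       (forall y : R, ~ (`|y - x| < e) -> phi y = 0) -> u phi = 0].

(* inf supp u, in the extended reals (= +oo when the support is empty). *)
Definition inf_supp (R : realType) (u : (R -> R) -> R[i]) : \bar R :=
  ereal_inf (EFin @` dsupp u).

(* Main.v *)
Require Import Defs.
From HB Require Import structures.
From mathcomp Require Import all_boot all_order all_algebra.
From mathcomp Require Import all_classical all_reals all_analysis.
From mathcomp Require Import complex ring zify.
From mathcomp Require Import separable cyclic cyclotomic.
Import Order.TTheory GRing.Theory Num.Theory.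
Local Open Scope ring_scope.
Lemma prim_exists (R : realType) (n : nat) : (0 < n)%N ->
  exists w : R[i], n.-primitive_root w.
Proof.
move=> hn.
have [rs Hrs] := closed_field_poly_normal ('X^n - 1 : {poly R[i]}).
rewrite (monicP (monic_Xn_sub_1 _ hn)) scale1r in Hrs.
have sep : separable_poly ('X^n - 1 : {poly R[i]}).
  by apply: separable_Xn_sub_1; rewrite pnatr_eq0 -lt0n.
have Urs : uniq rs by rewrite -separable_prod_XsubC -Hrs.
have szrs : size rs = n.
  have := size_Xn_sub_1 R[i] hn; rewrite Hrs size_prod_XsubC; by case.
have allr : all n.-unity_root rs.
  apply/allP => x xin; rewrite /root_of_unity /= Hrs root_prod_XsubC //.
have /hasP[w _ pw] := has_prim_root hn allr Urs (eq_leq (esym szrs)).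
by exists w.
Qed.
Local Open Scope classical_set_scope.

Lemma notsupp_comb (R : realType) (m : nat) (u : (R -> R) -> R[i])
  (v : 'I_m -> (R -> R) -> R[i]) (c : 'I_m -> R[i]) (x : R) :
  (forall phi, u phi = \sum_(i < m) c i * v i phi) ->
  (forall i, ~ dsupp (v i) x) -> ~ dsupp u x.
Proof.
move=> hu hv; rewrite /dsupp /= => H; apply: H.
have hv' : forall i, exists e : R, 0 < e /\ forall phi : R -> R, smooth phi ->
       (forall y : R, ~ (`|y - x| < e) -> phi y = 0) -> v i phi = 0.
  move=> i; have := hv i; rewrite /dsupp /= => /contrapT [e e0 He].
  by exists e; split.
have [E HE] := choice hv'.
exists (\big[Num.min/1]_(i < m) E i).
  apply: (big_ind (fun e : R => 0 < e)) => // [e1 e2 h1 h2|i _]; first by rewrite lt_min h1 h2.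
  by have [] := HE i.
move=> phi sphi hphi; rewrite hu big1 // => i _.
have [_ Hi] := HE i; rewrite (Hi phi sphi) ?mulr0 // => y hy; apply: hphi => hy'.
apply: hy; apply: (lt_le_trans hy'); exact: bigmin_le.
Qed.
Lemma geom_sum (R : realType) (n : nat) (w : R[i]) (d : nat) :
  n.-primitive_root w ->
  \sum_(l < n) (w ^+ d) ^+ l = if (d %% n == 0)%N then n%:R else 0.
Proof.
move=> pw; have hn := prim_order_gt0 pw.
have wn : (w ^+ d) ^+ n = 1 by rewrite -exprM mulnC exprM (prim_expr_order pw) expr1n.
case: ifP => hd.
  have -> : w ^+ d = 1.
    by apply/eqP; rewrite -(expr0 w) (eq_prim_root_expr pw) mod0n.
  under eq_bigr => i _ do rewrite expr1n.
  by rewrite GRing.sumr_const card_ord.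
have hne : w ^+ d - 1 != 0.
  by rewrite subr_eq0 -(expr0 w) (eq_prim_root_expr pw) mod0n hd.
have := subrX1 (w ^+ d) n; rewrite wn subrr => /esym/eqP.
by rewrite mulf_eq0 (negbTE hne) /= => /eqP.
Qed.

Lemma ortho (R : realType) (n : nat) (w : R[i]) (pw : n.-primitive_root w)
  (F : 'I_n -> R[i]) (k : 'I_n) :
  F k = \sum_(l < n) (n%:R^-1 * (w ^+ l) ^+ (n - k)) *
        (\sum_(j < n) (w ^+ l) ^+ j * F j).
Proof.
have hn := prim_order_gt0 pw.
have n0 : n%:R != 0 :> R[i] by rewrite pnatr_eq0 -lt0n.
have E : forall (j : 'I_n) (l : 'I_n), (n%:R^-1 * (w ^+ l) ^+ (n - k)) * ((w ^+ l) ^+ j * F j)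
   = n%:R^-1 * ((w ^+ (j + (n - k))) ^+ l * F j).
  move=> j l; rewrite -!exprM mulnDl exprD (mulnC l j) (mulnC l (n - k)%N).
  ring.
under eq_bigr => l _ do rewrite big_distrr /=.
rewrite exchange_big /=.
under eq_bigr => j _ do (under eq_bigr => l _ do rewrite E; rewrite -big_distrr /= -mulr_suml geom_sum //).
rewrite (bigD1 k) //= big1 ?addr0.
  rewrite subnKC; last exact: ltnW (ltn_ord k).
  by rewrite modnn eqxx mulrA mulVf // mul1r.
move=> j hj.
case: ifP => h; last by rewrite !mul0r mulr0.
exfalso; move: h hj.
have jn := ltn_ord j; have kn := ltn_ord k.
move=> /eqP h /eqP hjk; apply: hjk; apply: val_inj => /=.
move: (nat_of_ord j) (nat_of_ord k) jn kn h => a b ha hb.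
have := divn_eq (a + (n - b))%N n; move=> ed h; rewrite h addn0 in ed.
have : ((a + (n - b)) %/ n < 2)%N.
  rewrite ltn_divLR //; lia.
move: ed; case: ((a + (n - b)) %/ n)%N => [|[|m]] //=; lia.
Qed.

Lemma lt_inf_notsupp (R : realType) (u : (R -> R) -> R[i]) (x : R) :
  (x%:E < inf_supp u)%E -> ~ dsupp u x.
Proof.
move=> hx hs; have := ereal_inf_lbound (S := EFin @` dsupp u); move/(_ x%:E).
by move=> /(_ (ex_intro2 _ _ x hs erefl)); rewrite /inf_supp in hx; rewrite leNgt hx.
Qed.

Theorem lemma1 (R : realType) (n : nat) (hn : (0 < n)%N) (a b : R) (hab : a <= b)
  (f : 'I_n -> (R -> R) -> R[i])
  (hf : forall j, is_cdistr (f j) /\ dsupp (f j) `<=` `[a, b]) :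
  exists alpha : R[i], alpha ^+ n = 1 /\
    inf_supp (fun phi => \sum_(j < n) alpha ^+ j * f j phi)
    = \big[Order.min/+oo%E]_(j < n) inf_supp (f j).
Proof.
have [w pw] := @prim_exists R n hn.
pose g (l : 'I_n) := fun phi => \sum_(j < n) (w ^+ l) ^+ j * f j phi.
pose G l := inf_supp (g l).
pose M := \big[Order.min/+oo%E]_(j < n) inf_supp (f j).
pose l0 := [arg min_(l < Ordinal hn) G l]%O.
have hl0 : forall l, (G l0 <= G l)%E.
  rewrite /l0; case: arg_minP => // i _ H l; exact: H.
have C1 : forall l, (M <= G l)%E.
  move=> l; apply/ereal_infP => _ [x hx <-].
  rewrite leNgt; apply/negP => hlt.
  apply: (@notsupp_comb R n (g l) f (fun j => (w ^+ l) ^+ j) x) => //.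
  move=> j; apply: lt_inf_notsupp; apply: (lt_le_trans hlt); exact: bigmin_le.
have C2 : (G l0 <= M)%E.
  apply: le_bigmin => [|k _]; first exact: leey.
  apply/ereal_infP => _ [x hx <-].
  rewrite leNgt; apply/negP => hlt.
  apply: (@notsupp_comb R n (f k) g
     (fun l => n%:R^-1 * (w ^+ l) ^+ (n - k)) x) => //.
    move=> phi; rewrite /g /=.
    have H := @ortho R n w pw (fun j => f j phi) k; rewrite /= in H; exact: H.
  move=> l; apply: lt_inf_notsupp; apply: (lt_le_trans hlt); exact: hl0.
exists (w ^+ l0); split.
  by rewrite -exprM mulnC exprM (prim_expr_order pw) expr1n.
by apply: le_anti; rewrite C2 C1.
Qed.
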